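(* Let $(X,G)$ be topologically transitive and $\lambda$ a $G$-invariant Borel probability measure on $X$. There is an at most countable family $\mathcal N_c\subseteq\mathcal N$ such that $\bigcap_{N\in\mathcal N}K_t(N)=\bigcap_{N\in\mathcal N_c}K_t(N)$, and consequently $\bigcap_{N\in\mathcal N}K_0(N)=\bigcap_{N\in\mathcal N_c}K_0(N)$ for every $G$-invariant $X_0\subseteq X_t$ with $\lambda(X_0)=1$.
   Context: $G$ is a group acting by homeomorphisms on a compact metrizable space $X$; $X_t:=\{x\in X:\overline{Gx}=X\}$. $\mathcal N$ is the family of all closed $G$-invariant (for the diagonal action) subsets of $X^2$; for $N\in\mathcal N$, $N_x:=\{y:(x,y)\in N\}$, $d_N(x,x'):=\lambda(N_x\triangle N_{x'})$, $K_t(N):=\{(x,x')\in X_t^2:d_N(x,x')=0\}$ and $K_0(N):=K_t(N)\cap X_0^2$. *)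

(* Defs.v *)
From Stdlib Require Import Reals List.
Open Scope R_scope.

Section Defs.
Context {X : Type} (d : X -> X -> R).

Definition is_metric : Prop :=
  (forall x y, 0 <= d x y) /\ (forall x y, d x y = 0 <-> x = y) /\
  (forall x y, d x y = d y x) /\ (forall x y z, d x z <= d x y + d y z).

Definition is_open (U : X -> Prop) : Prop :=
  forall x, U x -> exists eps, 0 < eps /\ forall y, d x y < eps -> U y.

Definition is_compact_space : Prop :=
  forall (I : Type) (U : I -> X -> Prop),
    (forall i, is_open (U i)) -> (forall x, exists i, U i x) ->
    exists l : list I, forall x, exists i, In i l /\ U i x.

(** closed subsets of X^2 (product topology = topology of the max-metric) *)
Definition is_closed2 (N : X -> X -> Prop) : Prop :=
  forall x y, ~ N x y -> exists eps, 0 < eps /\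
    forall x' y', d x x' < eps -> d y y' < eps -> ~ N x' y'.

Definition continuous (f : X -> X) : Prop :=
  forall x eps, 0 < eps -> exists delta, 0 < delta /\
    forall y, d x y < delta -> d (f x) (f y) < eps.

Definition sigma_algebra (S : (X -> Prop) -> Prop) : Prop :=
  S (fun _ => True) /\
  (forall A, S A -> S (fun x => ~ A x)) /\
  (forall A : nat -> X -> Prop, (forall n, S (A n)) -> S (fun x => exists n, A n x)).

Definition Borel (A : X -> Prop) : Prop :=
  forall S, sigma_algebra S -> (forall U, is_open U -> S U) -> S A.

Definition is_borel_prob_measure (lam : (X -> Prop) -> R) : Prop :=
  (forall A, Borel A -> 0 <= lam A) /\
  lam (fun _ => False) = 0 /\
  lam (fun _ => True) = 1 /\
  (forall A : nat -> X -> Prop,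
     (forall n, Borel (A n)) ->
     (forall n m x, n <> m -> A n x -> A m x -> False) ->
     Un_cv (fun n => sum_f_R0 (fun i => lam (A i)) n) (lam (fun x => exists n, A n x))).

Definition dense (A : X -> Prop) : Prop :=
  forall U, is_open U -> (exists x, U x) -> exists x, U x /\ A x.

Context {G : Type} (mul : G -> G -> G) (one : G) (inv : G -> G).

Definition is_group : Prop :=
  (forall a b c, mul a (mul b c) = mul (mul a b) c) /\
  (forall a, mul one a = a) /\ (forall a, mul a one = a) /\
  (forall a, mul (inv a) a = one) /\ (forall a, mul a (inv a) = one).

Context (act : G -> X -> X).

(** action by homeomorphisms (each act g is continuous with continuous
    inverse act (inv g)) *)
Definition is_action_by_homeos : Prop :=
  (forall x, act one x = x) /\
  (forall g h x, act (mul g h) x = act g (act h x)) /\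
  (forall g, continuous (act g)).

Definition top_transitive : Prop :=
  forall U V, is_open U -> is_open V -> (exists x, U x) -> (exists x, V x) ->
    exists g x, U x /\ V (act g x).

Definition G_invariant_measure (lam : (X -> Prop) -> R) : Prop :=
  forall g A, Borel A -> lam (fun x => A (act g x)) = lam A.

Definition Xt (x : X) : Prop := dense (fun y => exists g, y = act g x).

Definition in_calN (N : X -> X -> Prop) : Prop :=
  is_closed2 N /\ forall g x y, N x y -> N (act g x) (act g y).

Definition G_invariant_set (A : X -> Prop) : Prop :=
  forall g x, A x -> A (act g x).

Definition dN (lam : (X -> Prop) -> R) (N : X -> X -> Prop) (x x' : X) : R :=
  lam (fun y => (N x y /\ ~ N x' y) \/ (N x' y /\ ~ N x y)).

Definition Kt (lam : (X -> Prop) -> R) (N : X -> X -> Prop) (x x' : X) : Prop :=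
  Xt x /\ Xt x' /\ dN lam N x x' = 0.

Definition K0 (lam : (X -> Prop) -> R) (X0 : X -> Prop) (N : X -> X -> Prop)
  (x x' : X) : Prop :=
  Kt lam N x x' /\ X0 x /\ X0 x'.
End Defs.

(* Main.v *)
Require Import Defs.
From Stdlib Require Import Reals List Lra Lia Cantor IndefiniteDescription Classical FunctionalExtensionality PropExtensionality.
Open Scope R_scope.

Lemma pext {X : Type} (A B : X -> Prop) : (forall x, A x <-> B x) -> A = B.
Proof. intro H; apply functional_extensionality; intro x; apply propositional_extensionality; auto. Qed.

Section Bor.
Context {X : Type} (d : X -> X -> R).

Lemma borel_open U : is_open d U -> Borel d U.
Proof. intros HU S HS HO; auto. Qed.

Lemma borel_compl A : Borel d A -> Borel d (fun x => ~ A x).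
Proof. intros HA S HS HO. destruct HS as [ST [SC SU]]. apply SC, HA; [split; auto|auto]. Qed.

Lemma borel_cunion (A : nat -> X -> Prop) : (forall n, Borel d (A n)) -> Borel d (fun x => exists n, A n x).
Proof. intros HA S HS HO. destruct HS as [ST [SC SU]]. apply SU; intro n; apply HA; [split; auto|auto]. Qed.

Lemma borel_true : Borel d (fun _ => True).
Proof. intros S HS HO; apply HS. Qed.

Lemma borel_false : Borel d (fun _ => False).
Proof. replace (fun _ : X => False) with (fun x : X => ~ (fun _ => True) x).
  apply borel_compl, borel_true. apply pext; intuition. Qed.

Lemma borel_union2 A B : Borel d A -> Borel d B -> Borel d (fun x => A x \/ B x).
Proof. intros HA HB.
  replace (fun x => A x \/ B x) with (fun x => exists n, (match n with O => A | _ => B end) x).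
  apply borel_cunion; intros [|n]; auto.
  apply pext; intro x; split. intros [[|n] H]; auto.
  intros [H|H]; [exists O|exists (S O)]; auto. Qed.

Lemma borel_inter2 A B : Borel d A -> Borel d B -> Borel d (fun x => A x /\ B x).
Proof. intros HA HB.
  replace (fun x => A x /\ B x) with (fun x => ~ ((fun y => ~ A y) x \/ (fun y => ~ B y) x)).
  apply borel_compl, borel_union2; apply borel_compl; auto.
  apply pext; intro x; split. intro H; split; apply NNPP; tauto. tauto. Qed.

Lemma borel_cinter (A : nat -> X -> Prop) : (forall n, Borel d (A n)) -> Borel d (fun x => forall n, A n x).
Proof. intros HA.
  replace (fun x => forall n, A n x) with (fun x => ~ exists n, (fun y => ~ A n y) x).
  apply borel_compl, borel_cunion; intro n; apply borel_compl; auto.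
  apply pext; intro x; split. intros H n; apply NNPP; intro H'; apply H; eauto.
  intros H [n Hn]; auto. Qed.

Lemma borel_ext A B : (forall x, A x <-> B x) -> Borel d A -> Borel d B.
Proof. intros H; rewrite (pext A B H); auto. Qed.

Variable lam : (X -> Prop) -> R.
Hypothesis Hlam : is_borel_prob_measure d lam.

Lemma m_pos A : Borel d A -> 0 <= lam A.
Proof. apply Hlam. Qed.

Lemma sum_aux (f : nat -> R) a b : f O = a -> f (S O) = b -> (forall n, (2 <= n)%nat -> f n = 0) ->
  forall n, sum_f_R0 f (S n) = a + b.
Proof. intros H0 H1 H2; induction n. simpl; lra.
  simpl sum_f_R0 in *. rewrite IHn, H2; [lra|lia]. Qed.

Lemma m_add2 A B : Borel d A -> Borel d B -> (forall x, A x -> B x -> False) ->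
  lam (fun x => A x \/ B x) = lam A + lam B.
Proof. intros HA HB Hd.
  destruct Hlam as [_ [H0 [_ Hadd]]].
  set (D := fun n : nat => match n with O => A | S O => B | _ => fun _ : X => False end).
  assert (HD : forall n, Borel d (D n)). intros [|[|n]]; simpl; auto using borel_false.
  assert (Hdis : forall n m x, n <> m -> D n x -> D m x -> False).
  { intros [|[|n]] [|[|m]] x Hnm; simpl; try tauto; try lia; eauto. }
  pose proof (Hadd D HD Hdis) as Hc.
  replace (fun x => exists n, D n x) with (fun x => A x \/ B x) in Hc.
  2:{ apply pext; intro x; split. intros [H|H]; [exists O|exists (S O)]; auto.
      intros [[|[|n]] H]; simpl in H; tauto. }
  eapply UL_sequence. exact Hc.
  intros eps Heps. exists (S O). intros n Hn. destruct n. lia.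
  rewrite (sum_aux (fun i => lam (D i)) (lam A) (lam B)); auto.
  unfold Rdist. rewrite Rminus_diag, Rabs_R0; auto.
  intros [|[|k]] Hk; try lia. simpl; auto. Qed.

Lemma m_split P Q : Borel d P -> Borel d Q ->
  lam P = lam (fun x => P x /\ Q x) + lam (fun x => P x /\ ~ Q x).
Proof. intros HP HQ. rewrite <- m_add2.
  f_equal; apply pext; intro x; tauto.
  apply borel_inter2; auto. apply borel_inter2; auto using borel_compl.
  intros x; tauto. Qed.

Lemma m_mono A B : Borel d A -> Borel d B -> (forall x, A x -> B x) -> lam A <= lam B.
Proof. intros HA HB H. rewrite (m_split B A HB HA).
  replace (fun x => B x /\ A x) with A. pose proof (m_pos (fun x => B x /\ ~ A x)).
  assert (0 <= lam (fun x => B x /\ ~ A x)) by (apply m_pos, borel_inter2; auto using borel_compl). lra.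
  apply pext; intro x; split; auto; tauto. Qed.

Lemma m_compl A : Borel d A -> lam (fun x => ~ A x) = 1 - lam A.
Proof. intro HA. destruct Hlam as [_ [_ [H1 _]]].
  rewrite <- H1. rewrite (m_split (fun _ => True) A borel_true HA).
  replace (fun x : X => True /\ A x) with A by (apply pext; tauto).
  replace (fun x : X => True /\ ~ A x) with (fun x => ~ A x) by (apply pext; tauto). lra. Qed.

Lemma chain_mono (A : nat -> X -> Prop) : (forall n x, A n x -> A (S n) x) ->
  forall n m x, (n <= m)%nat -> A n x -> A m x.
Proof. intros H n m x Hnm; induction Hnm; auto. Qed.

Lemma m_below (A : nat -> X -> Prop) : (forall n, Borel d (A n)) -> (forall n x, A n x -> A (S n) x) ->
  Un_cv (fun n => lam (A n)) (lam (fun x => exists n, A n x)).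
Proof. intros HA Hinc.
  set (D := fun n : nat => match n with O => A O | S k => fun x => A (S k) x /\ ~ A k x end).
  assert (HD : forall n, Borel d (D n)). intros [|n]; simpl; auto. apply borel_inter2; auto using borel_compl.
  assert (Hdis : forall n m x, n <> m -> D n x -> D m x -> False).
  { assert (K : forall n m x, (n < m)%nat -> D n x -> D m x -> False).
    { intros n [|m] x Hnm Hn Hm; [lia|]. simpl in Hm. destruct Hm as [_ Hm]. apply Hm.
      apply (chain_mono A Hinc n m); [lia|]. destruct n; simpl in Hn; tauto. }
    intros n m x Hnm Hn Hm. destruct (Nat.lt_gt_cases n m) as [[H|H] _]; eauto. }
  destruct Hlam as [_ [_ [_ Hadd]]].
  pose proof (Hadd D HD Hdis) as Hc.
  replace (fun x => exists n, D n x) with (fun x => exists n, A n x) in Hc.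
  2:{ apply pext; intro x; split.
      - intros [n Hn]. induction n. exists O; auto.
        destruct (classic (A n x)) as [H|H]; auto. exists (S n); simpl; auto.
      - intros [n Hn]; exists n; destruct n; simpl in Hn; tauto. }
  replace (fun n => lam (A n)) with (fun n => sum_f_R0 (fun i => lam (D i)) n); auto.
  apply functional_extensionality; intro n. induction n. simpl; auto.
  simpl sum_f_R0. rewrite IHn. simpl D.
  rewrite <- m_add2; auto. f_equal. apply pext; intro x; split.
  intros [H|H]; [auto|tauto]. intro H; destruct (classic (A n x)); auto.
  apply borel_inter2; auto using borel_compl. intros x H1 [_ H2]; auto. Qed.

Lemma lim_le (u : nat -> R) l b : Un_cv u l -> (forall n, u n <= b) -> l <= b.
Proof. intros Hu Hb. apply Rnot_lt_le; intro H.
  destruct (Hu (l - b)) as [N HN]; [lra|]. specialize (HN N (le_n N)). specialize (Hb N).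
  unfold Rdist in HN. apply Rabs_def2 in HN. lra. Qed.

Lemma m_above (F : nat -> X -> Prop) c : (forall n, Borel d (F n)) -> (forall n x, F (S n) x -> F n x) ->
  (forall n, c <= lam (F n)) -> c <= lam (fun x => forall n, F n x).
Proof. intros HF Hdec Hc.
  pose proof (m_below (fun n x => ~ F n x)) as Hb.
  assert (HB : forall n, Borel d (fun x => ~ F n x)) by (intro; apply borel_compl; auto).
  specialize (Hb HB). assert (Hl : lam (fun x => exists n, ~ F n x) <= 1 - c).
  { apply (lim_le _ _ _ (Hb (fun n x H H' => H (Hdec n x H')))). intro n. rewrite m_compl; auto. specialize (Hc n); lra. }
  replace (fun x => forall n, F n x) with (fun x => ~ (exists n, ~ F n x)).
  rewrite m_compl. lra. apply borel_cunion; auto.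
  apply pext; intro x; split. intros H n; apply NNPP; intro; apply H; eauto. intros H [n Hn]; auto. Qed.

Lemma borel_limsup (E : nat -> X -> Prop) : (forall n, Borel d (E n)) ->
  Borel d (fun y => forall m, exists n, (m <= n)%nat /\ E n y).
Proof. intro HE. apply borel_cinter; intro m. apply borel_cunion; intro n.
  destruct (Compare_dec.le_dec m n). apply (borel_ext (E n)); [intro; tauto|auto].
  apply (borel_ext (fun _ => False)); [intro; tauto|apply borel_false]. Qed.

Lemma m_limsup (E : nat -> X -> Prop) c : (forall n, Borel d (E n)) -> (forall n, c <= lam (E n)) ->
  c <= lam (fun y => forall m, exists n, (m <= n)%nat /\ E n y).
Proof. intros HE Hc. apply (m_above (fun m y => exists n, (m <= n)%nat /\ E n y)).
  - intro m. apply borel_cunion; intro n.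
    destruct (Compare_dec.le_dec m n). apply (borel_ext (E n)); [intro; tauto|auto].
    apply (borel_ext (fun _ => False)); [intro; tauto|apply borel_false].
  - intros m x [n [H1 H2]]; exists n; split; auto; lia.
  - intro m. apply Rle_trans with (lam (E m)); [apply Hc|]. apply m_mono; auto.
    apply borel_cunion; intro n.
    destruct (Compare_dec.le_dec m n). apply (borel_ext (E n)); [intro; tauto|auto].
    apply (borel_ext (fun _ => False)); [intro; tauto|apply borel_false].
    intros x H; exists m; auto. Qed.

End Bor.

Lemma small_inv eps : 0 < eps -> exists m, / INR (S m) < eps.
Proof. intro H. destruct (archimed_cor1 eps H) as [N [H1 H2]]. exists (pred N).
  replace (S (pred N)) with N by lia. auto. Qed.

Lemma inv_S_pos n : 0 < / INR (S n).
Proof. apply Rinv_0_lt_compat, lt_0_INR; lia. Qed.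

Lemma inv_S_le m n : (m <= n)%nat -> / INR (S n) <= / INR (S m).
Proof. intro H. apply Rinv_le_contravar. apply lt_0_INR; lia. apply le_INR; lia. Qed.

Lemma ball_open {X : Type} (d : X -> X -> R) (Hm : is_metric d) x r : is_open d (fun y => d x y < r).
Proof. intros y Hy. exists (r - d x y). split. lra.
  intros w Hw. destruct Hm as [_ [_ [_ Ht]]]. specialize (Ht x y w). lra. Qed.

Lemma dxx {X : Type} (d : X -> X -> R) (Hm : is_metric d) x : d x x = 0.
Proof. apply Hm; auto. Qed.

Lemma borel_section {X : Type} (d : X -> X -> R) (Hm : is_metric d) N x :
  is_closed2 d N -> Borel d (N x).
Proof. intro HN. apply (borel_ext d (fun y => ~ (fun z => ~ N x z) y)).
  intro; split; [apply NNPP|tauto].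
  apply borel_compl, borel_open. intros y Hy. destruct (HN x y Hy) as [e [He H]].
  exists e; split; auto. intros w Hw. apply H; auto. rewrite dxx; auto. Qed.

Lemma limsup_closed {X : Type} (d : X -> X -> R) (Hm : is_metric d) N z y (a : nat -> X) :
  is_closed2 d N -> (forall n, d z (a n) < / INR (S n)) ->
  (forall m, exists n, (m <= n)%nat /\ N (a n) y) -> N z y.
Proof. intros HN Ha Hl. apply NNPP; intro Hn. destruct (HN z y Hn) as [e [He H]].
  destruct (small_inv e He) as [m Hmm]. destruct (Hl m) as [n [Hmn Hy]].
  apply (H (a n) y); auto. pose proof (Ha n); pose proof (inv_S_le _ _ Hmn); lra.
  rewrite dxx; auto. Qed.

Lemma orbit_close {X G : Type} (d : X -> X -> R) (Hm : is_metric d) (act : G -> X -> X) x z eps :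
  Xt d act x -> 0 < eps -> exists g, d z (act g x) < eps.
Proof. intros Hx He. destruct (Hx (fun y => d z y < eps)) as [y [Hy [g Hg]]].
  apply ball_open; auto. exists z; rewrite dxx; auto. subst; eauto. Qed.

Lemma sec_inv {X G : Type} (d : X -> X -> R) (Hm : is_metric d) (mul : G -> G -> G) one inv
  (Hgrp : is_group mul one inv) (act : G -> X -> X) (Hact : is_action_by_homeos d mul one act)
  lam (Hinv : G_invariant_measure d act lam) N g x :
  in_calN d act N -> lam (N (act g x)) = lam (N x).
Proof. intros [HNc HNi]. destruct Hgrp as [_ [_ [_ [Hl Hr]]]]. destruct Hact as [H1 [HM _]].
  assert (E1 : forall y, act (inv g) (act g y) = y) by (intro y; rewrite <- HM, Hl; auto).
  assert (E2 : forall y, act g (act (inv g) y) = y) by (intro y; rewrite <- HM, Hr; auto).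
  replace (N (act g x)) with (fun y => N x (act (inv g) y)).
  apply Hinv. apply borel_section; auto.
  apply pext; intro y; split; intro H.
  rewrite <- (E2 y). apply HNi; auto.
  rewrite <- (E1 x). apply HNi; auto. Qed.

Lemma const_ge {X G : Type} (d : X -> X -> R) (Hm : is_metric d) (mul : G -> G -> G) one inv
  (Hgrp : is_group mul one inv) (act : G -> X -> X) (Hact : is_action_by_homeos d mul one act)
  lam (Hlam : is_borel_prob_measure d lam) (Hinv : G_invariant_measure d act lam) N x z :
  in_calN d act N -> Xt d act x -> lam (N x) <= lam (N z).
Proof. intros HN Hx.
  assert (Hc : forall n, exists g, d z (act g x) < / INR (S n)).
  { intro n; apply orbit_close; auto; apply inv_S_pos. }
  destruct (functional_choice _ Hc) as [gs Hgs].
  pose proof (m_limsup d lam Hlam (fun n => N (act (gs n) x)) (lam (N x))) as HL.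
  assert (HB : forall n, Borel d (N (act (gs n) x))) by (intro; apply borel_section, HN; auto).
  specialize (HL HB). eapply Rle_trans. apply HL.
  intro n. rewrite (sec_inv d Hm mul one inv Hgrp act Hact lam Hinv); [apply Rle_refl|auto].
  apply (m_mono d); auto. apply borel_limsup; auto. apply borel_section, HN; auto.
  intros y Hy. apply (limsup_closed d Hm N z y (fun n => act (gs n) x)); auto. apply HN. Qed.

Lemma const_eq {X G : Type} (d : X -> X -> R) (Hm : is_metric d) (mul : G -> G -> G) one inv
  (Hgrp : is_group mul one inv) (act : G -> X -> X) (Hact : is_action_by_homeos d mul one act)
  lam (Hlam : is_borel_prob_measure d lam) (Hinv : G_invariant_measure d act lam) N x z :
  in_calN d act N -> Xt d act x -> Xt d act z -> lam (N x) = lam (N z).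
Proof. intros; apply Rle_antisym; eapply const_ge; eauto. Qed.

Lemma dN_split {X : Type} (d : X -> X -> R) (Hm : is_metric d) lam (Hlam : is_borel_prob_measure d lam) N x x' :
  is_closed2 d N ->
  dN lam N x x' = lam (fun y => N x y /\ ~ N x' y) + lam (fun y => N x' y /\ ~ N x y) /\
  lam (N x) = lam (fun y => N x y /\ N x' y) + lam (fun y => N x y /\ ~ N x' y) /\
  lam (N x') = lam (fun y => N x y /\ N x' y) + lam (fun y => N x' y /\ ~ N x y) /\
  0 <= lam (fun y => N x y /\ ~ N x' y) /\ 0 <= lam (fun y => N x' y /\ ~ N x y).
Proof. intro HN. assert (B1 := borel_section d Hm N x HN). assert (B2 := borel_section d Hm N x' HN).
  split; [|split; [|split; [|split]]].
  - unfold dN. apply (m_add2 d lam Hlam); auto. apply borel_inter2; auto using borel_compl.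
    apply borel_inter2; auto using borel_compl. intros y; tauto.
  - apply (m_split d lam Hlam); auto.
  - rewrite (m_split d lam Hlam (N x') (N x)); auto. f_equal. f_equal. apply pext; intro; tauto.
  - apply (m_pos d); auto. apply borel_inter2; auto using borel_compl.
  - apply (m_pos d); auto. apply borel_inter2; auto using borel_compl. Qed.

Lemma Kt_open {X G : Type} (d : X -> X -> R) (Hm : is_metric d) (mul : G -> G -> G) one inv
  (Hgrp : is_group mul one inv) (act : G -> X -> X) (Hact : is_action_by_homeos d mul one act)
  lam (Hlam : is_borel_prob_measure d lam) (Hinv : G_invariant_measure d act lam) N x x' :
  in_calN d act N -> Xt d act x -> Xt d act x' -> dN lam N x x' <> 0 ->
  exists eps, 0 < eps /\ forall y y', Xt d act y -> Xt d act y' -> d x y < eps -> d x' y' < eps ->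
    dN lam N y y' <> 0.
Proof. intros HN Hx Hx' Hd. apply NNPP; intro Hno.
  assert (Hs : forall n, exists p : X * X, Xt d act (fst p) /\ Xt d act (snd p) /\
     d x (fst p) < / INR (S n) /\ d x' (snd p) < / INR (S n) /\ dN lam N (fst p) (snd p) = 0).
  { intro n. apply NNPP; intro Hn. apply Hno. exists (/ INR (S n)). split. apply inv_S_pos.
    intros y y' Hy Hy' H1 H2 H3. apply Hn. exists (y, y'); simpl; auto. }
  destruct (functional_choice _ Hs) as [ps Hps].
  set (c := lam (N x)).
  assert (Hcl := proj1 HN).
  assert (HE : forall n, Borel d (fun y => N (fst (ps n)) y /\ N (snd (ps n)) y)).
  { intro n; apply borel_inter2; apply borel_section; auto. }
  assert (Hc : forall n, c <= lam (fun y => N (fst (ps n)) y /\ N (snd (ps n)) y)).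
  { intro n. destruct (Hps n) as [Hy [Hy' [_ [_ H0]]]].
    destruct (dN_split d Hm lam Hlam N (fst (ps n)) (snd (ps n)) Hcl) as [A1 [A2 [A3 [A4 A5]]]].
    assert (c = lam (N (fst (ps n)))) by (eapply const_eq; eauto). lra. }
  pose proof (m_limsup d lam Hlam _ c HE Hc) as HL.
  assert (Hsub : c <= lam (fun y => N x y /\ N x' y)).
  { eapply Rle_trans. apply HL. apply (m_mono d); auto. apply borel_limsup; auto.
    apply borel_inter2; apply borel_section; auto.
    intros y Hy. split.
    - apply (limsup_closed d Hm N x y (fun n => fst (ps n))); auto. intro n; apply Hps.
      intro m; destruct (Hy m) as [n [H1 [H2 _]]]; eauto.
    - apply (limsup_closed d Hm N x' y (fun n => snd (ps n))); auto. intro n; apply Hps.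
      intro m; destruct (Hy m) as [n [H1 [_ H2]]]; eauto. }
  destruct (dN_split d Hm lam Hlam N x x' Hcl) as [A1 [A2 [A3 [A4 A5]]]].
  assert (c = lam (N x')) by (eapply const_eq; eauto).
  apply Hd. unfold c in *. lra. Qed.

Theorem mainTheorem10
  (X : Type) (d : X -> X -> R) (Hmet : is_metric d) (Hcpt : is_compact_space d)
  (G : Type) (mul : G -> G -> G) (one : G) (inv : G -> G)
  (Hgrp : is_group mul one inv)
  (act : G -> X -> X) (Hact : is_action_by_homeos d mul one act)
  (Htrans : top_transitive d act)
  (lam : (X -> Prop) -> R) (Hlam : is_borel_prob_measure d lam)
  (Hinv : G_invariant_measure d act lam) :
  exists Nc : nat -> X -> X -> Prop,
    (forall n, in_calN d act (Nc n)) /\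
    (forall x x', (forall N, in_calN d act N -> Kt d act lam N x x') <->
                  (forall n, Kt d act lam (Nc n) x x')) /\
    (forall X0 : X -> Prop,
       G_invariant_set act X0 -> (forall x, X0 x -> Xt d act x) ->
       Borel d X0 -> lam X0 = 1 ->
       forall x x', (forall N, in_calN d act N -> K0 d act lam X0 N x x') <->
                    (forall n, K0 d act lam X0 (Nc n) x x')).
Proof.
  assert (Hcov : forall k, exists l : list X, forall x, exists c, In c l /\ d c x < / INR (S k)).
  { intro k. destruct (Hcpt X (fun c y => d c y < / INR (S k))) as [l Hl].
    intro c; apply ball_open; auto.
    intro x; exists x; rewrite dxx; auto; apply inv_S_pos.
    exists l; auto. }
  destruct (functional_choice _ Hcov) as [Ls HLs].
  set (bas := fun n y y' => let k := fst (Cantor.of_nat n) in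
              let i := fst (Cantor.of_nat (snd (Cantor.of_nat n))) in
              let j := snd (Cantor.of_nat (snd (Cantor.of_nat n))) in
              exists c c', nth_error (Ls k) i = Some c /\ nth_error (Ls k) j = Some c' /\
                d c y < / INR (S k) /\ d c' y' < / INR (S k)).
  set (P := fun n N => in_calN d act N /\ forall y y', Xt d act y -> Xt d act y' -> bas n y y' ->
             dN lam N y y' <> 0).
  set (Ntop := fun _ _ : X => True).
  assert (Htop : in_calN d act Ntop).
  { split. intros x y H; exfalso; apply H; exact I. intros; exact I. }
  assert (Hex : forall n, exists N, in_calN d act N /\ ((exists N', P n N') -> P n N)).
  { intro n. destruct (classic (exists N', P n N')) as [[N' HN']|H].
    exists N'; split; [apply HN'|auto]. exists Ntop; split; [auto|tauto]. }
  destruct (functional_choice _ Hex) as [Nc HNc].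
  assert (Main : forall x x', (forall N, in_calN d act N -> Kt d act lam N x x') <->
                  (forall n, Kt d act lam (Nc n) x x')).
  { intros x x'; split.
    - intros H n; apply H; apply (proj1 (HNc n)).
    - intros H N HN. destruct (H O) as [Hx [Hx' _]]. split; [auto|split; [auto|]].
      apply NNPP; intro Hd.
      destruct (Kt_open d Hmet mul one inv Hgrp act Hact lam Hlam Hinv N x x' HN Hx Hx' Hd) as [e [He Hop]].
      destruct (small_inv (e / 2)) as [k Hk]; [lra|].
      destruct (HLs k x) as [c [Hc1 Hc2]]. destruct (HLs k x') as [c' [Hc1' Hc2']].
      destruct (In_nth_error _ _ Hc1) as [i Hi]. destruct (In_nth_error _ _ Hc1') as [j Hj].
      set (n := Cantor.to_nat (k, Cantor.to_nat (i, j))).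
      assert (Hdec : Cantor.of_nat n = (k, Cantor.to_nat (i, j))) by apply Cantor.cancel_of_to.
      assert (Hdec2 : Cantor.of_nat (Cantor.to_nat (i, j)) = (i, j)) by apply Cantor.cancel_of_to.
      assert (HP : P n N).
      { split; auto. intros y y' Hy Hy' Hb. apply Hop; auto.
        - unfold bas in Hb. cbv zeta in Hb. rewrite Hdec in Hb; cbn [fst snd] in Hb. rewrite Hdec2 in Hb; cbn [fst snd] in Hb.
          destruct Hb as [a [a' [Ha [Ha' [Hay Hay']]]]]. rewrite Hi in Ha. injection Ha; intro; subst a.
          destruct Hmet as [_ [_ [Hsym Htri]]]. pose proof (Htri x c y). rewrite (Hsym x c) in *. lra.
        - unfold bas in Hb. cbv zeta in Hb. rewrite Hdec in Hb; cbn [fst snd] in Hb. rewrite Hdec2 in Hb; cbn [fst snd] in Hb.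
          destruct Hb as [a [a' [Ha [Ha' [Hay Hay']]]]]. rewrite Hj in Ha'. injection Ha'; intro; subst a'.
          destruct Hmet as [_ [_ [Hsym Htri]]]. pose proof (Htri x' c' y'). rewrite (Hsym x' c') in *. lra. }
      destruct (HNc n) as [_ Himp]. destruct (Himp (ex_intro _ N HP)) as [_ Hq].
      destruct (H n) as [_ [_ H0]]. apply (Hq x x' Hx Hx'); auto.
      unfold bas. cbv zeta. rewrite Hdec; cbn [fst snd]. rewrite Hdec2; cbn [fst snd]. exists c, c'; auto. }
  exists Nc. split; [intro n; apply (proj1 (HNc n))|]. split; [exact Main|].
  intros X0 _ _ _ _ x x'. split.
  - intros H n. destruct (H _ (proj1 (HNc n))) as [H1 H2]. split; auto.
  - intros H N HN. destruct (H O) as [_ H2]. split; auto.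
    apply (proj2 (Main x x')). intro n; apply H. auto.
Qed.
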